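(* Let $\mathcal{U}_s=\{{\bf U}\in\mathbb{C}^{n\times n}:{\bf U}{\bf U}^H={\bf I}_n,\ {\bf U}={\bf U}^T\}$. For a complex symmetric matrix ${\bf A}={\bf A}^T\in\mathbb{C}^{n\times n}$ with Takagi factorization ${\bf A}={\bf Q}\boldsymbol{\Sigma}{\bf Q}^T$, define $\Pi({\bf A})={\bf Q}{\bf Q}^T$. Then $\Pi({\bf A})\in\mathcal{U}_s$ and $\Pi({\bf A})$ is a unitary symmetric matrix closest to ${\bf A}$ in Frobenius norm, i.e. $\|{\bf A}-\Pi({\bf A})\|_F=\min_{{\bf U}\in\mathcal{U}_s}\|{\bf A}-{\bf U}\|_F$ (if there are several minimizers, $\Pi({\bf A})$ is one of them).
   Context: Takagi factorization: every complex symmetric ${\bf A}={\bf A}^T\in\mathbb{C}^{n\times n}$ can be written as ${\bf A}={\bf Q}\boldsymbol{\Sigma}{\bf Q}^T$ where ${\bf Q}$ is an $n\times n$ unitary matrix and $\boldsymbol{\Sigma}=\operatorname{diag}(\sigma_1,\ldots,\sigma_n)$ with $\sigma_1\ge\cdots\ge\sigma_n\ge 0$. $\|\cdot\|_F$ is the Frobenius norm. *)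

(* Defs.v *)
(* complex numbers are R[i] = complex R over a real closed
   field R (mathcomp-real-closed); the usual C is the case R = reals. *)
From HB Require Import structures.
From mathcomp Require Import all_boot all_order all_algebra.
From mathcomp Require Import complex.
Set Implicit Arguments. Unset Strict Implicit. Unset Printing Implicit Defensive.
Import Order.TTheory GRing.Theory Num.Theory.
Local Open Scope ring_scope.
Local Open Scope complex_scope.

Definition ctrmx (R : rcfType) (m n : nat) (A : 'M[R[i]]_(m, n)) : 'M[R[i]]_(n, m) :=
  map_mx (@conjc R) A^T.

Definition frob (R : rcfType) (m n : nat) (A : 'M[R[i]]_(m, n)) : R :=
  Num.sqrt (\sum_(i < m) \sum_(j < n) (complex.Re (A i j) ^+ 2 + complex.Im (A i j) ^+ 2)).

Definition unitary (R : rcfType) (n : nat) (U : 'M[R[i]]_n) : Prop :=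
  U *m ctrmx U = 1%:M.

Definition unitary_sym (R : rcfType) (n : nat) (U : 'M[R[i]]_n) : Prop :=
  U *m ctrmx U = 1%:M /\ U = U^T.

Definition takagi (R : rcfType) (n : nat) (A Q : 'M[R[i]]_n) (s : 'rV[R]_n) : Prop :=
  [/\ unitary Q,
      (forall k : 'I_n, 0 <= s 0 k),
      (forall k l : 'I_n, (k <= l)%N -> s 0 l <= s 0 k)
    & A = Q *m diag_mx (map_mx (fun x : R => x%:C) s) *m Q^T].

(* Main.v *)
Require Import Defs.
From HB Require Import structures.
From mathcomp Require Import all_boot all_order all_algebra.
From mathcomp Require Import complex.
From mathcomp Require Import ring lra.
Import Order.TTheory GRing.Theory Num.Theory.
Set Implicit Arguments. Unset Strict Implicit.
Local Open Scope ring_scope.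
Local Open Scope complex_scope.

Section H.
Variable R : rcfType.
Implicit Types x y : R[i].

Lemma ReD x y : complex.Re (x + y) = complex.Re x + complex.Re y.
Proof. by case: x; case: y. Qed.
Lemma ReN x : complex.Re (- x) = - complex.Re x.
Proof. by case: x. Qed.
Lemma ReB x y : complex.Re (x - y) = complex.Re x - complex.Re y.
Proof. by rewrite ReD ReN. Qed.
Lemma Re_sum (I : finType) (F : I -> R[i]) : complex.Re (\sum_i F i) = \sum_i complex.Re (F i).
Proof. exact: (big_morph _ ReD). Qed.
Lemma ReJ x : complex.Re (x^*) = complex.Re x.
Proof. by case: x. Qed.
Lemma Re_mulJ x : complex.Re (x * x^*) = complex.Re x ^+ 2 + complex.Im x ^+ 2.
Proof. case: x => a b /=; ring. Qed.
Lemma Re_realM (a : R) x : complex.Re (a%:C * x) = a * complex.Re x.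
Proof. case: x => c d /=; ring. Qed.
Lemma Re_nat k : complex.Re (k%:R : R[i]) = k%:R.
Proof. by elim: k => // k IH; rewrite -addn1 !natrD ReD IH. Qed.

Lemma ctrmxM m n p (A : 'M[R[i]]_(m, n)) (B : 'M[R[i]]_(n, p)) :
  ctrmx (A *m B) = ctrmx B *m ctrmx A.
Proof. by rewrite /ctrmx trmx_mul map_mxM. Qed.
Lemma ctrmxB m n (A B : 'M[R[i]]_(m, n)) : ctrmx (A - B) = ctrmx A - ctrmx B.
Proof. by rewrite /ctrmx linearB /= map_mxB. Qed.
Lemma ctrmx_tr m n (A : 'M[R[i]]_(m, n)) : ctrmx (A^T) = map_mx (@conjc R) A.
Proof. by rewrite /ctrmx trmxK. Qed.
Lemma tr_ctrmx m n (A : 'M[R[i]]_(m, n)) : (ctrmx A)^T = map_mx (@conjc R) A.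
Proof. by rewrite /ctrmx map_trmx trmxK. Qed.
Lemma ctrmx1 n : ctrmx (1%:M : 'M[R[i]]_n) = 1%:M.
Proof. by rewrite /ctrmx trmx1 map_mx1. Qed.
Lemma tr_ctr n (A : 'M[R[i]]_n) : \tr (ctrmx A) = (\tr A)^*.
Proof.
rewrite /ctrmx /mxtrace rmorph_sum; apply: eq_bigr => i _; by rewrite !mxE.
Qed.

Definition f2 {m n} (X : 'M[R[i]]_(m, n)) := complex.Re (\tr (X *m ctrmx X)).

Lemma frobE n (X : 'M[R[i]]_n) : frob X = Num.sqrt (f2 X).
Proof.
rewrite /frob /f2 /mxtrace Re_sum; congr Num.sqrt; apply: eq_bigr => i _.
rewrite mxE Re_sum; apply: eq_bigr => j _.
by rewrite /ctrmx !mxE Re_mulJ.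
Qed.

Lemma unitaryC n (U : 'M[R[i]]_n) : unitary U -> ctrmx U *m U = 1%:M.
Proof. by move=> /mulmx1C. Qed.

Lemma unitary_tr n (Q : 'M[R[i]]_n) : unitary Q -> Q^T *m map_mx (@conjc R) Q = 1%:M.
Proof. by move=> /unitaryC H; rewrite -tr_ctrmx -trmx_mul H trmx1. Qed.

Lemma unitary_Re_le1 n (W : 'M[R[i]]_n) k : unitary W -> complex.Re (W k k) <= 1.
Proof.
move=> H.
have E : complex.Re ((W *m ctrmx W) k k) = 1 by rewrite H mxE eqxx.
rewrite mxE Re_sum (bigD1 k) //= in E.
have P : 0 <= \sum_(j | j != k) complex.Re (W k j * ctrmx W j k).
  apply: sumr_ge0 => j _; rewrite /ctrmx !mxE Re_mulJ; apply: addr_ge0; exact: sqr_ge0.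
have : complex.Re (W k k) ^+ 2 <= 1.
  rewrite /ctrmx !mxE Re_mulJ in E P *.
  have := sqr_ge0 (complex.Im (W k k)); lra.
move=> H2; nra.
Qed.
End H.
Arguments f2 {R m n}.

Section M.
Variable R : rcfType.

Lemma ctrmxK m n (A : 'M[R[i]]_(m, n)) : ctrmx (ctrmx A) = A.
Proof. by apply/matrixP => i j; rewrite /ctrmx !mxE conjcK. Qed.

Lemma f2_sub n (A U : 'M[R[i]]_n) : unitary U ->
  f2 (A - U) = f2 A + n%:R - 2 * complex.Re (\tr (A *m ctrmx U)).
Proof.
move=> HU; rewrite /f2 ctrmxB mulmxBl !mulmxBr !raddfB /= HU mxtrace1.
have -> : U *m ctrmx A = ctrmx (A *m ctrmx U) by rewrite ctrmxM ctrmxK.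
rewrite tr_ctr ReJ Re_nat; ring.
Qed.

Lemma tr_takagi n (Q : 'M[R[i]]_n) (s : 'rV[R]_n) (V : 'M[R[i]]_n) :
  \tr (Q *m diag_mx (map_mx (fun x : R => x%:C) s) *m Q^T *m V) =
  \sum_k (s 0 k)%:C * (Q^T *m V *m Q) k k.
Proof.
rewrite -!mulmxA mxtrace_mulC -!mulmxA [Q^T *m (V *m Q)]mulmxA mul_diag_mx.
by rewrite /mxtrace; apply: eq_bigr => k _; rewrite !mxE.
Qed.
End M.

Lemma f2_ge0 (R : rcfType) n (X : 'M[R[i]]_n) : 0 <= f2 X.
Proof.
rewrite /f2 /mxtrace Re_sum; apply: sumr_ge0 => i _.
rewrite mxE Re_sum; apply: sumr_ge0 => j _.
rewrite /ctrmx !mxE Re_mulJ; apply: addr_ge0; exact: sqr_ge0.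
Qed.

Theorem proposition2 (R : rcfType) (n : nat) (A Q : 'M[R[i]]_n) (s : 'rV[R]_n) :
  A^T = A -> takagi A Q s ->
  unitary_sym (Q *m Q^T) /\
  (forall U : 'M[R[i]]_n, unitary_sym U -> frob (A - Q *m Q^T) <= frob (A - U)).
Proof.
move=> AT [HQ s0 _ HA].
have HQc : ctrmx Q *m Q = 1%:M := unitaryC HQ.
have HQt := unitary_tr HQ.
have ctrU0 : ctrmx (Q *m Q^T) = map_mx (@conjc R) Q *m ctrmx Q.
  by rewrite ctrmxM ctrmx_tr.
have U0u : unitary (Q *m Q^T).
  by rewrite /unitary ctrU0 mulmxA -[Q *m Q^T *m _]mulmxA HQt mulmx1 HQ.
split.
  by split => //; rewrite trmx_mul trmxK.
move=> U [HU _].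
rewrite !frobE ler_sqrt ?f2_ge0 // !f2_sub //.
suff H : complex.Re (\tr (A *m ctrmx U)) <= complex.Re (\tr (A *m ctrmx (Q *m Q^T))) by lra.
rewrite HA !tr_takagi.
have -> : Q^T *m ctrmx (Q *m Q^T) *m Q = 1%:M.
  by rewrite ctrU0 mulmxA HQt mul1mx HQc.
rewrite !Re_sum; apply: ler_sum => k _.
rewrite !Re_realM.
have -> : (1%:M : 'M[R[i]]_n) k k = 1 by rewrite mxE eqxx.
have -> : complex.Re (1 : R[i]) = 1 by [].
set W := Q^T *m ctrmx U *m Q.
have HW : unitary W.
  rewrite /unitary /W !ctrmxM ctrmxK ctrmx_tr !mulmxA.
  rewrite -[_ *m Q *m ctrmx Q]mulmxA HQ mulmx1 -[_ *m ctrmx U *m U]mulmxA (unitaryC HU) mulmx1 HQt //.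
have := unitary_Re_le1 k HW.
have := s0 k.
nra.
Qed.
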